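(* Let $C:\mathbb{R}^n\to\mathbb{R}$ be convex, increasing and $\mathbf 1$-invariant with $C(\vec 0)>0$, and define $\varphi:\mathbb{R}^n_{>0}\to\mathbb{R}$ by $\varphi(\vec q)=\alpha$, where $\alpha>0$ is the unique positive number with $C(-\vec q/\alpha)=0$. Then $\varphi$ is 1-homogeneous, concave and increasing.
   Context: $\mathbf 1=(1,\dots,1)$. $C$ is $\mathbf 1$-invariant if $C(\vec q+\alpha\mathbf 1)=C(\vec q)+\alpha$ for all $\vec q,\alpha$; a function is increasing if $f(\vec q)>f(\vec q')$ whenever $\vec q\succeq\vec q'$ coordinatewise and $\vec q\neq\vec q'$ (both in its domain). $\mathbb{R}^n_{>0}$ is the set of vectors with all coordinates strictly positive. A function $f$ on $\mathbb{R}^n_{>0}$ is 1-homogeneous if $f(\alpha\vec q)=\alpha f(\vec q)$ for all $\vec q\in\mathbb{R}^n_{>0}$ and $\alpha>0$. (The existence and uniqueness of such $\alpha$ for every $\vec q\in\mathbb{R}^n_{>0}$ holds under these hypotheses.) *)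

(* Defs.v *)
From HB Require Import structures.
From mathcomp Require Import all_boot all_order all_algebra.
From mathcomp Require Import boolp classical_sets reals.
Set Implicit Arguments. Unset Strict Implicit. Unset Printing Implicit Defensive.
Import Order.TTheory GRing.Theory Num.Theory.
Local Open Scope ring_scope.

Section Defs.
Variables (R : realType) (n : nat).

Definition ones : 'rV[R]_n := const_mx 1.

Definition vge (q q' : 'rV[R]_n) : Prop := forall i, q' 0 i <= q 0 i.

Definition vpos (q : 'rV[R]_n) : Prop := forall i, 0 < q 0 i.

Definition convex_fun (C : 'rV[R]_n -> R) : Prop :=
  forall (x y : 'rV[R]_n) (t : R), 0 <= t -> t <= 1 ->
    C (t *: x + (1 - t) *: y) <= t * C x + (1 - t) * C y.

Definition increasing_fun (C : 'rV[R]_n -> R) : Prop :=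
  forall q q' : 'rV[R]_n, vge q q' -> q <> q' -> C q' < C q.

Definition one_invariant (C : 'rV[R]_n -> R) : Prop :=
  forall (q : 'rV[R]_n) (a : R), C (q + a *: ones) = C q + a.

Definition phi (C : 'rV[R]_n -> R) (q : 'rV[R]_n) : R :=
  xget 0 [set a : R | 0 < a /\ C (- (a^-1 *: q)) = 0].

Definition homogeneous1_pos (f : 'rV[R]_n -> R) : Prop :=
  forall (q : 'rV[R]_n) (a : R), vpos q -> 0 < a -> f (a *: q) = a * f q.

Definition concave_pos (f : 'rV[R]_n -> R) : Prop :=
  forall (x y : 'rV[R]_n) (t : R), vpos x -> vpos y -> 0 <= t -> t <= 1 ->
    t * f x + (1 - t) * f y <= f (t *: x + (1 - t) *: y).

Definition increasing_pos (f : 'rV[R]_n -> R) : Prop :=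
  forall q q' : 'rV[R]_n, vpos q -> vpos q' -> vge q q' -> q <> q' -> f q' < f q.

End Defs.

(* Main.v *)
Require Import Defs.
From HB Require Import structures.
From mathcomp Require Import all_boot all_order all_algebra.
From mathcomp Require Import boolp classical_sets reals.
From mathcomp Require Import ring lra.
Import Order.TTheory GRing.Theory Num.Theory.
Local Open Scope ring_scope.

Section Aux.
Variables (R : realType) (n : nat) (C : 'rV[R]_n -> R).
Hypotheses (Ccvx : convex_fun C) (Cinc : increasing_fun C)
  (Cinv : one_invariant C) (C0 : 0 < C 0).

Lemma mono x y : vge x y -> C y <= C x.
Proof. move=> H; case: (eqVneq x y) => [->//|ne]; apply/ltW/Cinc => //; exact/eqP. Qed.

Lemma lip x y d : vge (y + d *: ones R n) x -> C x <= C y + d.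
Proof. by move=> H; rewrite -Cinv; apply: mono. Qed.

Lemma npos : (0 < n)%N.
Proof.
case: (posnP n) => // n0.
have E : ones R n = 0 by apply/matrixP => i [j hj]; move: hj; rewrite n0.
have := Cinv 0 1; rewrite E scaler0 addr0; lra.
Qed.

Definition i0 : 'I_n := Ordinal npos.

Lemma neq_at (x y : 'rV[R]_n) (i : 'I_n) : x 0 i != y 0 i -> x <> y.
Proof. by move=> ne E; rewrite E eqxx in ne. Qed.

Lemma hstrict q s t : vpos q -> s < t -> C (-(t *: q)) < C (-(s *: q)).
Proof.
move=> qp st; apply: Cinc.
  by move=> i; rewrite !mxE; have := qp i; nra.
apply: (@neq_at _ _ i0); rewrite !mxE; apply/negP => /eqP E; have := qp i0; nra.
Qed.

Lemma hmono q s t : vpos q -> s <= t -> C (-(t *: q)) <= C (-(s *: q)).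
Proof.
move=> qp; rewrite le_eqVlt => /orP [/eqP -> //|st]; exact/ltW/hstrict.
Qed.

Lemma exist_root q : vpos q -> exists s, 0 < s /\ C (-(s *: q)) = 0.
Proof.
move=> qp.
set M := \sum_i q 0 i.
have qM : forall i, q 0 i <= M.
  move=> i; rewrite /M (bigD1 i) //= lerDl; apply: sumr_ge0 => j _; exact: ltW.
have M0 : 0 < M by apply: lt_le_trans (qp i0) (qM i0).
set Si := \sum_i (q 0 i)^-1.
have qS : forall i, (q 0 i)^-1 <= Si.
  move=> i; rewrite /Si (bigD1 i) //= lerDl; apply: sumr_ge0 => j _.
  by rewrite invr_ge0; exact: ltW.
have Si0 : 0 < Si by apply: lt_le_trans (qS i0); rewrite invr_gt0.
set m := Si^-1.
have m0 : 0 < m by rewrite invr_gt0.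
have mq : forall i, m <= q 0 i.
  move=> i; rewrite -[q 0 i]invrK lef_pV2 ?qS // posrE ?invr_gt0 //.
set h := fun t => C (-(t *: q)).
have hub : forall t, 0 <= t -> h t <= C 0 + - (t * m).
  move=> t t0; rewrite /h; apply: lip => i; rewrite add0r /ones !mxE.
  have := mq i; nra.
set S : set R := fun t => 0 <= t /\ 0 < h t.
have h0 : h 0 = C 0 by rewrite /h scale0r oppr0.
have hS : has_sup S.
  split; first by exists 0; split => //; rewrite h0.
  exists (C 0 / m) => t [t0 ht]; rewrite ler_pdivlMr //; have := hub t t0; lra.
set s := sup S.
have sup_ub := sup_upper_bound hS.
have s0 : 0 <= s by apply: sup_ub; split => //; rewrite h0.
have lipH : forall a b, a <= b -> h a <= h b + (b - a) * M.
  move=> a b ab; rewrite /h; apply: lip => i; rewrite /ones !mxE.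
  have := qM i; have := qp i; nra.
have hs : h s = 0.
  case: (ltgtP (h s) 0) => // [hneg | hpos].
  - have e0 : 0 < - (h s) / M by rewrite divr_gt0 // oppr_gt0.
    have he : (- (h s) / M) * M = - h s by rewrite divfK // gt_eqF.
    have [t St lt] := sup_adherent e0 hS.
    have ts := sup_ub t St.
    case: St => t0 ht.
    have := lipH t s ts.
    move: lt he; set e := - (h s) / M => lt he.
    have P : 0 < (t - (s - e)) * M by rewrite mulr_gt0 // subr_gt0.
    move: P he ht; clearbody e M; lra.
  - have e0 : 0 < h s / (2 * M) by rewrite divr_gt0 // mulr_gt0.
    have he : (h s / (2 * M)) * M = h s / 2.
      by field; rewrite gt_eqF.
    move: e0 he; set e := h s / (2 * M) => e0 he.
    have St : S (s + e).
      split; first lra.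
      have se : s <= s + e by lra.
      have := lipH s (s + e) se; rewrite addrAC subrr add0r he.
      move: hpos; clearbody e; lra.
    have H : s + e <= s by exact: sup_ub _ St.
    move: H e0; clearbody e; lra.
exists s; split => //.
rewrite lt_neqAle s0 andbT; apply/eqP => s_eq.
by move: hs; rewrite -s_eq h0 => E; move: C0; rewrite E ltxx.
Qed.

Lemma phi_spec q : vpos q -> 0 < phi C q /\ C (-((phi C q)^-1 *: q)) = 0.
Proof.
move=> qp; have [s [s0 hs]] := exist_root _ qp.
rewrite /phi; set P := (X in xget 0 X).
have : P (xget 0 P).
  apply: xgetPex; exists s^-1; split; [by rewrite invr_gt0 | by rewrite invrK].
by [].
Qed.

Lemma phi_uniq q a : vpos q -> 0 < a -> C (-(a^-1 *: q)) = 0 -> phi C q = a.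
Proof.
move=> qp a0 ha; have [b0 hb] := phi_spec _ qp.
case: (ltgtP (phi C q) a) => // lt.
- have : a^-1 < (phi C q)^-1 by rewrite ltf_pV2 ?posrE.
  move/(hstrict _ _ _ qp); rewrite ha hb ltxx //.
- have : (phi C q)^-1 < a^-1 by rewrite ltf_pV2 ?posrE.
  move/(hstrict _ _ _ qp); rewrite ha hb ltxx //.
Qed.

End Aux.

Theorem lemma4p4 (R : realType) (n : nat) (C : 'rV[R]_n -> R) :
  convex_fun C -> increasing_fun C -> one_invariant C -> 0 < C 0 ->
  homogeneous1_pos (phi C) /\ concave_pos (phi C) /\ increasing_pos (phi C).
Proof.
move=> Ccvx Cinc Cinv C0.
have spec : forall q, vpos q -> 0 < phi C q /\ C (-((phi C q)^-1 *: q)) = 0.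
  by move=> q qp; apply: phi_spec.
have uniq : forall q a, vpos q -> 0 < a -> C (-(a^-1 *: q)) = 0 -> phi C q = a.
  by move=> q a qp a0 ha; apply: phi_uniq.
have strict : forall q s t, vpos q -> s < t -> C (-(t *: q)) < C (-(s *: q)).
  by move=> q s t qp st; apply: hstrict.
split; [|split].
- move=> q a qp a0.
  have [b0 hb] := spec q qp.
  apply: uniq => //.
  + by move=> i; rewrite mxE mulr_gt0.
  + by rewrite mulr_gt0.
  rewrite scalerA invfM mulrAC mulVf ?mul1r // gt_eqF //.
- move=> x y t xp yp t0 t1.
  have [a0 ha] := spec x xp; have [b0 hb] := spec y yp.
  move: a0 ha b0 hb; set a := phi C x; set b := phi C y => a0 ha b0 hb.
  set z := t *: x + (1 - t) *: y.
  have c0 : 0 < t * a + (1 - t) * b.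
    case: (ltrP 0 t) => tp; first by nra.
    have -> : t = 0 by lra.
    by rewrite mul0r add0r subr0 mul1r.
  have zp : vpos z.
    move=> i; rewrite !mxE; have := xp i; have := yp i.
    case: (ltrP 0 t) => tp; first by nra.
    have -> : t = 0 by lra.
    by rewrite mul0r add0r subr0 mul1r.
  have [p0 hp] := spec z zp.
  move: c0 p0 hp; set c := t * a + (1 - t) * b; set p := phi C z => c0 p0 hp.
  rewrite leNgt; apply/negP => pc.
  have : c^-1 < p^-1 by rewrite ltf_pV2 ?posrE.
  move/(strict z _ _ zp); rewrite hp => H.
  set w := t * a / c.
  have w0 : 0 <= w by rewrite divr_ge0 // ?mulr_ge0 // ltW.
  have w1 : w <= 1 by rewrite ler_pdivrMr // mul1r /c; nra.
  have E : - (c^-1 *: z) = w *: (- (a^-1 *: x)) + (1 - w) *: (- (b^-1 *: y)).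
    apply/rowP => i; rewrite /z /w !mxE.
    have cn : c != 0 by rewrite gt_eqF.
    move: cn; rewrite /c => cn.
    field; rewrite cn ?gt_eqF //.
  have := Ccvx (- (a^-1 *: x)) (- (b^-1 *: y)) w w0 w1.
  rewrite -E ha hb !mulr0 addr0 => H'.
  by move: H; rewrite ltNge H'.
- move=> q q' qp qp' ge ne.
  have [a0 ha] := spec q qp; have [b0 hb] := spec q' qp'.
  rewrite ltNge; apply/negP => ab.
  have ab' : (phi C q')^-1 <= (phi C q)^-1 by rewrite lef_pV2 ?posrE.
  have H1 : C (-((phi C q)^-1 *: q)) <= C (-((phi C q')^-1 *: q)) by apply: hmono.
  have H2 : C (- ((phi C q')^-1 *: q)) < C (- ((phi C q')^-1 *: q')).
    apply: Cinc.
      move=> i; rewrite !mxE; have := ge i; have := invr_gt0 (phi C q'); rewrite b0 => c0; nra.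
    move=> E; apply: ne; apply/rowP => j.
    have Ej : (- ((phi C q')^-1 *: q')) 0 j = (- ((phi C q')^-1 *: q)) 0 j by rewrite E.
    move: Ej; rewrite !mxE => Ej; have c0 : 0 < (phi C q')^-1 by rewrite invr_gt0.
    move: Ej c0; set c := (phi C q')^-1; nra.
  move: H1 H2; rewrite ha hb; lra.
Qed.
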